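(* Let $n$ be a positive integer, let $\mathfrak A=(A_1,\dots,A_k)$ be an ordered partition of $[n]$ into nonempty blocks with length-vector $(\ell_1,\dots,\ell_{k-1})=(|A_1|,\dots,|A_{k-1}|)$, and let $\mathbf a\colon[n]\to[n]$ be such that $\operatorname{coim}(\mathbf a)=\mathfrak A$. Then $\mathbf a$ is a parking function if and only if $\operatorname{rim}(\mathbf a)\in\langle\ell_1,\dots,\ell_{k-1}\rangle$; and $\mathbf a$ is a parking function with $\operatorname{run}(\mathbf a)=r$ if and only if $\operatorname{rim}(\mathbf a)=(0,1,\dots,r-1,x_{r+1},\dots,x_k)$ for some integers $x_{r+1},\dots,x_k$ with $$(0,x_{r+1}-r,\dots,x_k-r)\in\Big\langle \Big(\sum_{i=1}^r\ell_i\Big)-r,\ \ell_{r+1},\dots,\ell_{k-1}\Big\rangle.$$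
   Context: Let $[n]=\{1,\dots,n\}$. A parking function of length $n$ is $\mathbf a=(a_1,\dots,a_n)\in[n]^n$ with $|\{j:a_j\le i\}|\ge i$ for every $i\in[n]$. If $1\in\{a_1,\dots,a_n\}$, $\operatorname{run}(\mathbf a)=\max\{i\in[n]:[i]\subseteq\{a_1,\dots,a_n\}\}$; otherwise $\operatorname{run}(\mathbf a)=0$. If $\{a_1,\dots,a_n\}=\{x_1<\dots<x_k\}$, the reduced image is $\operatorname{rim}(\mathbf a)=(x_1-1,\dots,x_k-1)$, and the coimage $\operatorname{coim}(\mathbf a)$ is the set of fibers $\mathbf a^{-1}(\{x_j\})$, ordered by increasing value $x_j$, viewed as an ordered partition of $[n]$. For integers $\ell_1,\dots,\ell_m$ with partial sums $L_i=\ell_1+\dots+\ell_i$, $\langle\ell_1,\dots,\ell_m\rangle=\{(x_0,\dots,x_m)\in\mathbb Z^{m+1}: x_0=0,\ x_{i-1}<x_i\le L_i\ \forall\, 1\le i\le m\}$. *)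

(* Defs.v *)
From HB Require Import structures.
From mathcomp Require Import all_boot all_order all_algebra.
From mathcomp Require Import finmap.
Set Implicit Arguments. Unset Strict Implicit. Unset Printing Implicit Defensive.
Import Order.TTheory GRing.Theory Num.Theory.
Local Open Scope fset_scope.
Local Open Scope ring_scope.
Local Open Scope nat_scope.

(* [n] = {1,...,n} is represented by iota 1 n; a map a : [n] -> [n] is a
   function nat -> nat whose values outside [n] are irrelevant. *)

Definition parking (n : nat) (a : nat -> nat) : Prop :=
  (forall j, 1 <= j <= n -> 1 <= a j <= n) /\
  (forall i, 1 <= i <= n -> i <= count (fun j => a j <= i) (iota 1 n)).

Definition img (n : nat) (a : nat -> nat) : seq nat :=
  sort leq (undup [seq a j | j <- iota 1 n]).

Definition run (n : nat) (a : nat -> nat) : nat :=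
  if 1 \in img n a then
    \max_(1 <= i < n.+1 | all (fun t => t \in img n a) (iota 1 i)) i
  else 0.

Definition rim (n : nat) (a : nat -> nat) : seq int :=
  [seq (x%:Z - 1)%R | x <- img n a].

Definition coim (n : nat) (a : nat -> nat) : seq {fset nat} :=
  [seq [fset j | j in [seq j <- iota 1 n | a j == x]] | x <- img n a].

Definition ordered_partition (n : nat) (A : seq {fset nat}) : Prop :=
  all (fun B => B != fset0) A /\
  pairwise (fun B C => [disjoint B & C]) A /\
  (forall j, (1 <= j <= n) = has (fun B => j \in B) A).

Definition lenvec (A : seq {fset nat}) : seq int :=
  [seq (#|` B|)%:Z | B <- take (size A).-1 A].

Definition in_bracket (l : seq int) (x : seq int) : Prop :=
  size x = (size l).+1 /\ nth 0%R x 0 = 0%R /\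
  (forall i, 1 <= i <= size l ->
     (nth 0%R x i.-1 < nth 0%R x i)%R /\
     (nth 0%R x i <= \sum_(j < i) nth 0%R l j)%R).

(* Main.v *)
Require Import Defs.
From HB Require Import structures.
From mathcomp Require Import all_boot all_order all_algebra.
From mathcomp Require Import finmap.
Import Order.TTheory GRing.Theory Num.Theory.

From mathcomp Require Import zify.
Set Implicit Arguments. Unset Strict Implicit. Unset Printing Implicit Defensive.

Lemma cntA1 (s : seq nat) m : sorted ltn s -> m < size s ->
  count (fun x => x < nth 0 s m) s = m.
Proof.
elim: s m => [|y s IH] m //= Hs Hm.
have Hy := order_path_min ltn_trans Hs.
have Hs' := path_sorted Hs.
case: m Hm => [|m] Hm /=.
  rewrite ltnn add0n; apply/eqP; rewrite -leqn0 leqNgt -has_count.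
  apply/hasP => -[x xs]; move/allP: Hy => /(_ x xs); lia.
have Hm' : m < size s by [].
have := mem_nth 0 Hm'; move/allP: Hy => Hy /Hy ->.
by rewrite IH.
Qed.

Lemma cntA2 (s : seq nat) t : sorted ltn s -> count (fun x => x <= t) s < size s ->
  t < nth 0 s (count (fun x => x <= t) s).
Proof.
elim: s => [|y s IH] //= Hs.
have Hy := order_path_min ltn_trans Hs.
have Hs' := path_sorted Hs.
case: (leqP y t) => Hyt /=.
  by rewrite add1n ltnS => H; apply: IH.
have -> : count (fun x => x <= t) s = 0.
  apply/eqP; rewrite -leqn0 leqNgt -has_count.
  apply/hasP => -[x xs]; move/allP: Hy => /(_ x xs); lia.
by [].
Qed.

Lemma sumH (s : seq nat) t (F : nat -> nat) : sorted ltn s ->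
  \sum_(x <- s | x <= t) F x = \sum_(j < count (fun x => x <= t) s) F (nth 0 s j).
Proof.
elim: s => [|y s IH] Hs; first by rewrite big_nil big_ord0.
have Hy := order_path_min ltn_trans Hs.
have Hs' := path_sorted Hs.
rewrite big_cons /= IH //.
case: (leqP y t) => Hyt /=.
  by rewrite add1n big_ord_recl.
have -> : count (fun x => x <= t) s = 0.
  apply/eqP; rewrite -leqn0 leqNgt -has_count.
  apply/hasP => -[x xs]; move/allP: Hy => /(_ x xs); lia.
by rewrite add0n !big_ord0.
Qed.

Lemma cntG (s : seq nat) (l : seq nat) (a : nat -> nat) (P : pred nat) :
  uniq s -> {in l, forall j, a j \in s} ->
  count (fun j => P (a j)) l = \sum_(x <- s | P x) count (fun j => a j == x) l.
Proof.
move=> Us; elim: l => [|j l IH] Hl /=.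
  by rewrite big1.
rewrite big_split /= IH; last by move=> i il; apply: Hl; rewrite inE il orbT.
congr (_ + _).
rewrite big_mkcond (bigD1_seq (a j)) //=; last by apply: Hl; rewrite inE eqxx.
rewrite big1 ?addn0 ?eqxx; first by case: (P (a j)).
by move=> i /negbTE Hi; rewrite eq_sym Hi; case: (P i).
Qed.

Lemma lowb (s : seq nat) j : sorted ltn s -> all (fun x => 0 < x) s -> j < size s ->
  j < nth 0 s j.
Proof.
move=> Hs Hp; elim: j => [|j IH] Hj.
  by move/allP: Hp; apply; apply: mem_nth.
have := sorted_ltn_nth ltn_trans 0 Hs.
move=> /(_ j j.+1); rewrite !inE => H.
have := H (ltnW Hj) Hj (ltnSn j); have := IH (ltnW Hj); lia.
Qed.

Lemma maxP (P : pred nat) n :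
  let M := \max_(1 <= i < n.+1 | P i) i in M = 0 \/ (P M /\ 1 <= M <= n).
Proof.
elim: n => [|n IH] /=.
  by left; rewrite big_geq.
rewrite big_mkcond big_nat_recr //= -big_mkcond.
set M := \max_(1 <= i < n.+1 | P i) i in IH *.
case: (boolP (P n.+1)) => Pn; last by rewrite maxn0; case: IH; auto; move=> [? ?]; right; split => //; lia.
case: (leqP M n.+1) => Hc.
  right; split => //; lia.
exfalso; case: IH => [E|[? ?]]; lia.
Qed.

Lemma sum_drop (l : seq int) r i : (\sum_(j<i) nth 0 (drop r l) j = \sum_(j < r+i) nth 0 l j - \sum_(j<r) nth 0 l j)%R.
Proof.
elim: i => [|i IH]; first by rewrite big_ord0 addn0 GRing.subrr.
by rewrite big_ord_recr IH addnS big_ord_recr /= nth_drop GRing.addrAC.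
Qed.

Lemma sum_cons (x : int) l i : (\sum_(j < i.+1) nth 0 (x :: l) j = x + \sum_(j<i) nth 0 l j)%R.
Proof. by rewrite big_ord_recl; congr (_ + _)%R; apply: eq_bigr => j _; rewrite lift0. Qed.

Section Main.
Variables (n : nat) (a : nat -> nat).
Hypothesis n0 : 0 < n.
Hypothesis Ha : forall j, 1 <= j <= n -> 1 <= a j <= n.

Local Notation s := (img n a).
Local Notation c x := (count (fun j => a j == x) (iota 1 n)).
Definition LL m := \sum_(j < m) c (nth 0 s j).

Lemma s_sorted : sorted ltn s.
Proof.
by rewrite ltn_sorted_uniq_leq sort_uniq undup_uniq sort_sorted //; exact: leq_total.
Qed.

Lemma s_mem x : (x \in s) = (x \in [seq a j | j <- iota 1 n]).
Proof. by rewrite /img mem_sort mem_undup. Qed.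

Lemma s_range x : x \in s -> 1 <= x <= n.
Proof.
rewrite s_mem => /mapP [j]; rewrite mem_iota => Hj ->; apply: Ha; lia.
Qed.

Lemma s_pos : all (fun x => 0 < x) s.
Proof. by apply/allP => x /s_range /andP []. Qed.

Lemma a_in j : j \in iota 1 n -> a j \in s.
Proof. by move=> Hj; rewrite s_mem; apply: map_f. Qed.

Lemma c_pos x : x \in s -> 0 < c x.
Proof.
rewrite s_mem => /mapP [j Hj ->]; rewrite -has_count; apply/hasP; exists j => //.
Qed.

Lemma F1 t : count (fun j => a j <= t) (iota 1 n) = LL (count (fun x => x <= t) s).
Proof.
rewrite (@cntG s (iota 1 n) a (fun x => x <= t)).
- by rewrite sumH //; exact: s_sorted.
- by rewrite /img sort_uniq undup_uniq.
- by move=> j; apply: a_in.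
Qed.

Lemma k_pos : 0 < size s.
Proof.
have : a 1 \in s by apply: a_in; rewrite mem_iota; lia.
by case: (s).
Qed.

Lemma Lk : LL (size s) = n.
Proof.
have E1 : count (fun x => x <= n) s = size s.
  by rewrite -count_predT; apply: eq_in_count => x /s_range /andP[_ ->].
rewrite -E1 -F1 -[RHS](size_iota 1 n) -count_predT; apply: eq_in_count => j.
rewrite mem_iota => Hj.
have Hj' : 0 < j <= n by lia.
by have /andP[_ ->] := Ha Hj'.
Qed.

Lemma L_ge m : m <= size s -> m <= LL m.
Proof.
elim: m => [|m IH] Hm //.
rewrite /LL big_ord_recr /= -/(LL m).
have H2 := c_pos (mem_nth 0 Hm); have H1 := IH (ltnW Hm).
by rewrite -addn1; apply: leq_add.
Qed.

Lemma parkP : parking n a <-> (forall m, m < size s -> nth 0 s m <= LL m + 1).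
Proof.
split.
- move=> [_ Hp] m Hm.
  have Hr := s_range (mem_nth 0 Hm).
  have Hc := cntA1 s_sorted Hm.
  move: Hr Hc; set v := nth 0 s m => Hr Hc.
  case E: (v == 1); first by move/eqP: E => ->; lia.
  have Ht : 1 <= v.-1 <= n by move/negbT: E; lia.
  have := Hp _ Ht; rewrite F1.
  have -> : count (fun x => x <= v.-1) s = m.
    rewrite -[RHS]Hc; apply: eq_count => x /=; lia.
  lia.
- move=> H; split => // t Ht; rewrite F1.
  have : count (fun x => x <= t) s <= size s by apply: count_size.
  rewrite leq_eqVlt => /orP [/eqP E | Hlt].
    by rewrite E Lk; lia.
  have := cntA2 s_sorted Hlt; have := H _ Hlt; lia.
Qed.


Lemma size_coim : size (coim n a) = size s.
Proof. by rewrite /coim size_map. Qed.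

Lemma card_blk x : #|` [fset j | j in [seq j <- iota 1 n | a j == x]]%fset| = c x.
Proof. by rewrite card_fseq undup_id ?filter_uniq ?iota_uniq // size_filter. Qed.

Lemma size_tk : size (take (size (coim n a)).-1 (coim n a)) = (size s).-1.
Proof. rewrite size_take size_coim; case: ifP => // /negbT; lia. Qed.

Lemma size_lv : size (lenvec (coim n a)) = (size s).-1.
Proof. by rewrite /lenvec size_map size_tk. Qed.

Lemma nth_lv j : j < (size s).-1 -> nth 0%R (lenvec (coim n a)) j = Posz (c (nth 0 s j)).
Proof.
move=> Hj.
have Hj' : j < size s by lia.
rewrite /lenvec (nth_map fset0); last by rewrite size_tk.
rewrite nth_take ?size_coim //.
by rewrite /coim (nth_map 0) // card_blk.
Qed.

Lemma Lz_eq m : m <= (size s).-1 -> (\sum_(j<m) nth 0%R (lenvec (coim n a)) j)%R = Posz (LL m).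
Proof.
elim: m => [|m IH] Hm; first by rewrite big_ord0 /LL big_ord0.
by rewrite big_ord_recr /= IH ?(ltnW Hm) // nth_lv // /LL big_ord_recr /= PoszD.
Qed.

Lemma size_rim : size (rim n a) = size s.
Proof. by rewrite /rim size_map. Qed.

Lemma nth_rim i : i < size s -> nth 0%R (rim n a) i = (Posz (nth 0 s i) - 1)%R.
Proof. by move=> Hi; rewrite /rim (nth_map 0). Qed.

Lemma s_lt i j : i < j -> j < size s -> nth 0 s i < nth 0 s j.
Proof.
move=> Hij Hj; apply: (sorted_ltn_nth ltn_trans 0 s_sorted) => //; rewrite inE //.
exact: ltn_trans Hij Hj.
Qed.

Lemma LL0 : LL 0 = 0.
Proof. by rewrite /LL big_ord0. Qed.

Lemma part1 : parking n a <-> in_bracket (lenvec (coim n a)) (rim n a).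
Proof.
have kp := k_pos.
rewrite parkP; split.
- move=> H; split; first by rewrite size_rim size_lv prednK.
  split.
    rewrite nth_rim //; have := H 0 kp; rewrite LL0.
    have := s_range (mem_nth 0 kp); set v := nth 0 s 0; lia.
  move=> i; rewrite size_lv => Hi.
  have Hi' : i < size s by move: Hi; case: (size s) => //; lia.
  have Hi1 : i.-1 < size s by lia.
  rewrite Lz_eq; last by lia.
  rewrite !nth_rim //.
  have := s_lt (_ : i.-1 < i) Hi'; have := H i Hi'.
  set u := nth 0 s i.-1; set v := nth 0 s i; set w := LL i.
  move=> A1 A2; split; [ | ]; lia.
- move=> [Hsz [H0 H]] m Hm.
  case: m Hm => [|m] Hm.
    move: H0; rewrite nth_rim // LL0; set v := nth 0 s 0; lia.
  have Hm' : 1 <= m.+1 <= size (lenvec (coim n a)) by rewrite size_lv; move: Hm; case: (size s) => //; lia.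
  have [_] := H _ Hm'; rewrite Lz_eq; last by move: Hm'; rewrite size_lv.
  rewrite nth_rim //; set v := nth 0 s m.+1; set w := LL m.+1; lia.
Qed.


Definition Q r := (forall i, i < r -> nth 0 s i = i.+1) /\ r.+1 < nth 0 s r /\
  (forall m, r <= m < size s -> nth 0 s m <= LL m + 1).

Lemma init_seg r : r <= size s -> (forall i, i < r -> i.+1 \in s) ->
  forall i, i < r -> nth 0 s i = i.+1.
Proof.
move=> Hr Hin.
suff H : forall m, m <= r -> forall j, j < m -> nth 0 s j = j.+1 by move=> i Hi; apply: (H r).
elim => [|m IH] Hm j Hj //.
rewrite ltnS leq_eqVlt in Hj; case/orP: Hj => [/eqP -> | Hj]; last by apply: IH => //; lia.
have Hmem := Hin m Hm.
have Hp : index m.+1 s < size s by rewrite index_mem.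
have Hn := nth_index 0 Hmem.
have Hl := lowb s_sorted s_pos Hp.
move: Hl; rewrite Hn => Hl.
case: (ltnP (index m.+1 s) m) => Hpm.
  have := IH (ltnW Hm) _ Hpm; rewrite Hn; lia.
have -> : m = index m.+1 s by lia.
by rewrite Hn; lia.
Qed.

Lemma run_eq : 1 \in s -> run n a = \max_(1 <= i < n.+1 | all (fun t => t \in s) (iota 1 i)) i.
Proof. by rewrite /run => ->. Qed.

Lemma part2a r : r < size s -> (parking n a /\ run n a = r) <-> Q r.
Proof.
move=> Hr.
have kp := k_pos.
split.
- move=> [Hpk Hrun]; have HP := proj1 parkP Hpk.
  have H0 : nth 0 s 0 = 1.
    have := HP 0 kp; rewrite LL0; have := s_range (mem_nth 0 kp); set v := nth 0 s 0; lia.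
  have H1s : 1 \in s by rewrite -H0 mem_nth.
  move: Hrun; rewrite run_eq // => Hrun.
  have Hr1 : 1 <= r.
    rewrite -Hrun; apply: (@leq_bigmax_seq _ _ (fun i => all (fun t => t \in s) (iota 1 i)) (fun i => i) 1).
      by rewrite mem_index_iota; lia.
    by rewrite /= H1s.
  have [E|[HPr _]] := maxP (fun i => all (fun t => t \in s) (iota 1 i)) n.
    by exfalso; move: E; rewrite Hrun; lia.
  rewrite Hrun in HPr.
  have Hin : forall i, i < r -> i.+1 \in s.
    by move=> i Hi; move/allP: HPr; apply; rewrite mem_iota; lia.
  have Hseg := init_seg (ltnW Hr) Hin.
  split => //; split; last by move=> m /andP[_ Hm]; apply: HP.
  have Hl := lowb s_sorted s_pos Hr.
  case E: (nth 0 s r == r.+1); last by move/negbT: E; lia.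
  move/eqP: E => E; exfalso.
  have Hrn : r.+1 <= n by have := s_range (mem_nth 0 Hr); rewrite E; lia.
  have : r.+1 <= r.
    rewrite -[X in _ <= X]Hrun.
    apply: (@leq_bigmax_seq _ _ (fun i => all (fun t => t \in s) (iota 1 i)) (fun i => i) r.+1).
      by rewrite mem_index_iota; lia.
    have HH : all (fun t => t \in s) (iota 1 (r + 1)).
      by rewrite iotaD all_cat HPr /= add1n andbT -E mem_nth.
    by rewrite addn1 in HH.
  lia.
- move=> [Hseg [Hgap Hub]].
  have Hr1 : 0 < r.
    case: r Hr Hseg Hgap Hub => // Hr _ Hgap Hub.
    have := Hub 0 (introT andP (conj (leqnn 0) kp)); rewrite LL0; lia.
  have H0 : nth 0 s 0 = 1 by apply: Hseg.
  have H1s : 1 \in s by rewrite -H0 mem_nth.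
  split.
    apply/parkP => m Hm.
    case: (ltnP m r) => Hmr; last by apply: Hub; rewrite Hmr.
    rewrite Hseg //; have := L_ge (ltnW Hm); lia.
  rewrite run_eq //; apply/eqP; rewrite eqn_leq; apply/andP; split.
    apply/bigmax_leqP_seq => i _ Hall.
    rewrite leqNgt; apply/negP => Hir.
    have Hmem : r.+1 \in s by move/allP: Hall; apply; rewrite mem_iota; lia.
    have Hp : index r.+1 s < size s by rewrite index_mem.
    have Hn := nth_index 0 Hmem.
    case: (ltngtP (index r.+1 s) r) => Hpr.
    + by move: Hn; rewrite Hseg //; lia.
    + have := s_lt Hpr Hp; rewrite Hn; lia.
    + by move: Hgap; rewrite -Hpr Hn; lia.
  have Hrn : r <= n.
    have Hr' : r.-1 < size s by lia.
    have := s_range (mem_nth 0 Hr'); rewrite Hseg; last by lia.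
    rewrite prednK //; lia.
  apply: (@leq_bigmax_seq _ _ (fun i => all (fun t => t \in s) (iota 1 i)) (fun i => i) r).
    by rewrite mem_index_iota; lia.
  apply/allP => t; rewrite mem_iota => Ht.
  have Ht' : t.-1 < r by lia.
  have := mem_nth 0 (ltn_trans Ht' Hr); rewrite Hseg // prednK //; lia.
Qed.


Lemma part2b r : r < size s ->
  (exists xs : seq int, size xs = size (coim n a) - r /\
     rim n a = [seq Posz i | i <- iota 0 r] ++ xs /\
     in_bracket ((\sum_(i < r) nth 0%R (lenvec (coim n a)) i - Posz r)%R :: drop r (lenvec (coim n a)))
       (0%R :: [seq (x - Posz r)%R | x <- xs])) <-> Q r.
Proof.
move=> Hr; have kp := k_pos.
have HLr : (\sum_(i < r) nth 0%R (lenvec (coim n a)) i)%R = Posz (LL r) by apply: Lz_eq; lia.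
rewrite HLr size_coim.
have Hsl : size ((Posz (LL r) - Posz r)%R :: drop r (lenvec (coim n a))) = size s - r.
  by rewrite /= size_drop size_lv; lia.
split.
- move=> [xs [Hsz [Hrim [_ [_ Hbr]]]]].
  rewrite Hsl in Hbr.
  have Hxs : xs = drop r (rim n a) by rewrite Hrim drop_size_cat // size_map size_iota.
  have nxs : forall i, r + i < size s -> nth 0%R xs i = (Posz (nth 0 s (r+i)) - 1)%R.
    by move=> i Hi; rewrite Hxs nth_drop nth_rim.
  split.
    move=> i Hi; have := congr1 (fun z => nth 0%R z i) Hrim => /=.
    rewrite nth_rim; last by lia.
    rewrite nth_cat size_map size_iota Hi (nth_map 0) ?size_iota // nth_iota //; set v := nth 0 s i; lia.
  split.
    have H1 : 1 <= 1 <= size s - r by lia.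
    have [H _] := Hbr 1 H1.
    move: H; rewrite /= (nth_map 0%R); last by rewrite Hsz; lia.
    rewrite nxs ?addn0 //; set v := nth 0 s r; lia.
  move=> m /andP [Hrm Hm].
  have H1 : 1 <= (m - r).+1 <= size s - r by lia.
  have [_ H] := Hbr (m - r).+1 H1.
  move: H; rewrite sum_cons sum_drop subnKC // !Lz_eq; [|lia|lia].
  rewrite /= (nth_map 0%R); last by rewrite Hsz; lia.
  rewrite nxs subnKC //; set v := nth 0 s m; set w := LL m; set u := LL r; lia.
- move=> [Hseg [Hgap Hub]].
  exists (drop r (rim n a)); split; first by rewrite size_drop size_rim.
  have nxs : forall i, r + i < size s -> nth 0%R (drop r (rim n a)) i = (Posz (nth 0 s (r+i)) - 1)%R.
    by move=> i Hi; rewrite nth_drop nth_rim.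
  split.
    rewrite -[LHS](cat_take_drop r); congr (_ ++ _).
    apply: (@eq_from_nth _ 0%R); first by rewrite size_take size_rim Hr size_map size_iota.
    move=> i; rewrite size_take size_rim Hr => Hi.
    rewrite nth_take // nth_rim; last by lia.
    rewrite (nth_map 0) ?size_iota // nth_iota // Hseg //; lia.
  split; first by rewrite Hsl /= size_map size_drop size_rim.
  split => //.
  rewrite Hsl => -[|i] // /andP [_ Hi].
  have Hri : r + i < size s by lia.
  rewrite sum_cons sum_drop !Lz_eq; [|lia|lia].
  rewrite /= (nth_map 0%R); last by rewrite size_drop size_rim; lia.
  rewrite nxs //.
  have H1 : r <= r + i < size s by lia.
  have Hu := Hub (r + i) H1.
  split; last by move: Hu; set v := nth 0 s (r+i); set w := LL (r+i); set u := LL r; lia.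
  case: i Hi Hri Hu H1 => [|i] Hi Hri Hu H1.
    by move: Hgap; rewrite /= addn0; set v := nth 0 s r; lia.
  rewrite /= (nth_map 0%R); last by rewrite size_drop size_rim; lia.
  rewrite nxs; last by lia.
  have H2 : (r + i).+1 < size s by lia.
  have := s_lt (ltnSn (r + i)) H2.
  rewrite addnS; set v := nth 0 s (r+i); set v' := nth 0 s (r+i).+1; lia.
Qed.

End Main.

Theorem lemma4p8 (n : nat) (A : seq {fset nat}) (a : nat -> nat) :
  0 < n ->
  ordered_partition n A ->
  (forall j, 1 <= j <= n -> 1 <= a j <= n) ->
  coim n a = A ->
  (parking n a <-> in_bracket (lenvec A) (rim n a)) /\
  (forall r : nat, r < size A ->
     (parking n a /\ run n a = r) <->
     exists xs : seq int,
       size xs = size A - r /\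
       rim n a = [seq (i%:Z)%R | i <- iota 0 r] ++ xs /\
       in_bracket
         ((\sum_(i < r) nth 0%R (lenvec A) i - r%:Z)%R :: drop r (lenvec A))
         (0%R :: [seq (x - r%:Z)%R | x <- xs])).

Proof.
move=> Hn _ Ha <-.
split; first exact: (@part1 n a Hn Ha).
move=> r Hr.
have Hr' : r < size (img n a) by rewrite -(@size_coim n a).
apply: iff_trans (@part2a n a Hn Ha r Hr') _.
have [H1 H2] := @part2b n a Hn r Hr'.
split; [exact H2 | exact H1].
Qed.
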